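(* Let $k$ be an uncountable algebraically closed field and let $A$ be a just infinite $k$-algebra which is countably generated as a $k$-algebra and does not satisfy a polynomial identity. Then $A$ is stably just infinite.
   Context: All rings are associative unital algebras over a field. A $k$-algebra $A$ is called just infinite if $\dim_k(A)=\infty$ and every nonzero two-sided ideal of $A$ has finite codimension in $A$. A just infinite $k$-algebra $A$ is stably just infinite if $A\otimes_k K$ is just infinite over $K$ for every field extension $K/k$. *)

(* Defs.v *)
From HB Require Import structures.
From mathcomp Require Import all_boot all_order all_algebra.
Set Implicit Arguments. Unset Strict Implicit. Unset Printing Implicit Defensive.
Import GRing.Theory.
Local Open Scope ring_scope.

Definition uncountable (T : Type) : Prop :=
  forall f : nat -> T, ~ (forall t, exists n, f n = t).

Definition two_sided_ideal (R : pzRingType) (I : R -> Prop) : Prop :=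
  [/\ I 0, (forall x y, I x -> I y -> I (x + y)) &
      (forall a x, I x -> I (a * x) /\ I (x * a))].

Definition fin_codim (F : fieldType) (V : lmodType F) (I : V -> Prop) : Prop :=
  exists n (e : 'I_n -> V), forall v : V,
    exists c : 'I_n -> F, I (v - \sum_(i < n) c i *: e i).

Definition infinite_dim (F : fieldType) (V : lmodType F) : Prop :=
  ~ fin_codim (fun v : V => v = 0).

Definition just_infinite (F : fieldType) (A : algType F) : Prop :=
  infinite_dim A /\
  forall I : A -> Prop, two_sided_ideal I -> (exists x, I x /\ x <> 0) ->
    fin_codim I.

Definition subalgebra (F : fieldType) (A : algType F) (S : A -> Prop) : Prop :=
  [/\ S 1, (forall x y, S x -> S y -> S (x + y)),
      (forall x y, S x -> S y -> S (x * y)) &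
      (forall (c : F) x, S x -> S (c *: x))].

Definition countably_generated (F : fieldType) (A : algType F) : Prop :=
  exists g : nat -> A, forall S : A -> Prop, subalgebra S ->
    (forall n, S (g n)) -> forall a, S a.

(* A satisfies a polynomial identity: there is a nonzero element of the free
   algebra F<x_0,...,x_(n-1)> (a finitely supported coefficient function on
   words, words of length > d having coefficient 0) vanishing on all
   substitutions of elements of A. *)
Definition satisfies_PI (F : fieldType) (A : algType F) : Prop :=
  exists (n d : nat) (c : seq 'I_n -> F),
    [/\ (forall w : seq 'I_n, (d < size w)%N -> c w = 0),
        (exists w, c w != 0) &
        (forall x : 'I_n -> A,
           \sum_(m < d.+1) \sum_(w : m.-tuple 'I_n)
               c (tval w) *: \prod_(i <- tval w) x i = 0)].

(* B together with j : A -> B is (a model of) the base change A (x)_k K,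
   where K is a field extension of k via iota: j is a k-algebra map (k acting
   on B through iota), the image of j spans B over K, and j maps k-linearly
   independent families to K-linearly independent families.  Equivalently,
   the induced map A (x)_k K -> B, a (x) t |-> t *: j a, is a K-algebra
   isomorphism. *)
Definition is_base_change (k K : fieldType) (iota : {rmorphism k -> K})
    (A : algType k) (B : algType K) (j : A -> B) : Prop :=
  [/\ (forall x y, j (x + y) = j x + j y),
      (forall x y, j (x * y) = j x * j y),
      j 1 = 1 &
      (forall (c : k) x, j (c *: x) = iota c *: j x)] /\
  [/\
      (forall b : B, exists n (d : 'I_n -> K) (a : 'I_n -> A),
          b = \sum_(i < n) d i *: j (a i)) &
      (forall n (a : 'I_n -> A),
         (forall c : 'I_n -> k, \sum_(i < n) c i *: a i = 0 -> forall i, c i = 0) ->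
         forall d : 'I_n -> K, \sum_(i < n) d i *: j (a i) = 0 -> forall i, d i = 0)].

Definition stably_just_infinite (k : fieldType) (A : algType k) : Prop :=
  just_infinite A /\
  forall (K : fieldType) (iota : {rmorphism k -> K}) (B : algType K) (j : A -> B),
    is_base_change iota j -> just_infinite B.

(* Main.v *)
Require Import Defs.
From HB Require Import structures.
From mathcomp Require Import all_boot all_order all_algebra fingroup perm.
From Stdlib Require Import Classical ClassicalEpsilon.
Set Implicit Arguments. Unset Strict Implicit. Unset Printing Implicit Defensive.
Import GRing.Theory.
Local Open Scope ring_scope.

Section LinAlg.
Variables (F : fieldType) (V : lmodType F).

Definition indep n (e : 'I_n -> V) :=
  forall c : 'I_n -> F, \sum_(i < n) c i *: e i = 0 -> forall i, c i = 0.

Lemma dep_mod (P : V -> Prop) :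
  P 0 -> (forall x y, P x -> P y -> P (x + y)) -> (forall c x, P x -> P (c *: x)) ->
  forall m N (e : 'I_N -> V) (x : 'I_m -> V) (c : 'I_m -> 'I_N -> F),
  (N < m)%N -> (forall i, P (x i - \sum_(l < N) c i l *: e l)) ->
  exists g : 'I_m -> F, (exists i, g i != 0) /\ P (\sum_(i < m) g i *: x i).
Proof.
move=> P0 PD PZ m N e x c ltNm Hx.
pose Xm : 'M[F]_(m, N) := \matrix_(i, l) c i l.
have : kermx Xm != 0.
  rewrite -mxrank_eq0 mxrank_ker -lt0n subn_gt0.
  exact: leq_ltn_trans (rank_leq_col Xm) ltNm.
case/matrix0Pn => i0 [j0 nz].
exists (fun j => kermx Xm i0 j); split; first by exists j0.
have HK : forall l, \sum_j kermx Xm i0 j * c j l = 0.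
  move=> l; have := mulmx_ker Xm; move/matrixP/(_ i0 l).
  rewrite !mxE => E; rewrite -[RHS]E; apply: eq_bigr => j _; congr (_ * _); by rewrite /Xm mxE.
have -> : \sum_(i < m) kermx Xm i0 i *: x i =
   \sum_(i < m) kermx Xm i0 i *: (x i - \sum_(l < N) c i l *: e l)
   + \sum_(l < N) (\sum_j kermx Xm i0 j * c j l) *: e l.
  under [Y in _ = _ + Y]eq_bigr do rewrite scaler_suml.
  rewrite exchange_big /= -big_split /=; apply: eq_bigr => i _.
  rewrite scalerDr scalerN scaler_sumr.
  rewrite [Y in _ = _ + Y](_ : _ = \sum_(l < N) kermx Xm i0 i *: (c i l *: e l)) ?addrNK //.
  by apply: eq_bigr => l _; rewrite scalerA.
under [Y in _ + Y]eq_bigr do rewrite HK scale0r.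
rewrite big1_eq addr0.
by apply: big_ind => // i _; apply: PZ.
Qed.

Definition ext (T : Type) n (a : 'I_n -> T) (v : T) : 'I_n.+1 -> T :=
  fun i => if unlift ord_max i is Some i' then a i' else v.

Lemma ext_lift (T : Type) n (a : 'I_n -> T) v i : ext a v (lift ord_max i) = a i.
Proof. by rewrite /ext liftK. Qed.

Lemma ext_max (T : Type) n (a : 'I_n -> T) v : ext a v ord_max = v.
Proof. by rewrite /ext unlift_none. Qed.

Lemma sum_ord_max (W : nmodType) n (G : 'I_n.+1 -> W) :
  \sum_(i < n.+1) G i = \sum_(i < n) G (lift ord_max i) + G ord_max.
Proof.
rewrite big_ord_recr /=; congr (_ + _); apply: eq_bigr => i _; congr G.
by apply: val_inj; rewrite /= /bump leqNgt ltn_ord.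
Qed.

Lemma indep_ext n (a : 'I_n -> V) v :
  indep a -> (forall c : 'I_n -> F, v <> \sum_(i < n) c i *: a i) -> indep (ext a v).
Proof.
move=> ia nv c; rewrite sum_ord_max; under eq_bigr do rewrite ext_lift.
rewrite ext_max => H.
have cm : c ord_max = 0.
  apply/eqP; apply: contraT => nz; exfalso.
  apply: (nv (fun i => - (c ord_max)^-1 * c (lift ord_max i))).
  apply: (scalerI nz); rewrite scaler_sumr.
  have -> : c ord_max *: v = - \sum_(i < n) c (lift ord_max i) *: a i.
    by apply/eqP; rewrite -addr_eq0 addrC H.
  rewrite -sumrN; apply: eq_bigr => i _.
  by rewrite scalerA mulrA mulrN mulfV // mulN1r scaleNr.
rewrite cm scale0r addr0 in H.
move=> i; case: (unliftP ord_max i) => [j ->|->] //.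
exact: ia H j.
Qed.

Lemma exists_indep : infinite_dim V -> forall m, exists a : 'I_m -> V, indep a.
Proof.
move=> inf; elim=> [|m [a ia]].
  by exists (fun _ => 0) => c _ [].
have [v nv] : exists v, forall c : 'I_m -> F, v <> \sum_(i < m) c i *: a i.
  apply: NNPP => H; apply: inf; exists m, a => v.
  apply: NNPP => H2; apply: H; exists v => c E; apply: H2; exists c.
  by rewrite E subrr.
by exists (ext a v); apply: indep_ext.
Qed.

Lemma basis_ext n (b : 'I_n -> V) :
  exists r (e : 'I_r -> V), indep e /\
    exists beta : 'I_n -> 'I_r -> F, forall i, b i = \sum_(l < r) beta i l *: e l.
Proof.
elim: n b => [|n IH] b.
  by exists 0%N, (fun _ => 0); split; [move=> c _ [] | exists (fun _ _ => 0) => -[]].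
have [r [e [ie [beta Hb]]]] := IH (fun i => b (lift ord_max i)).
case: (classic (exists c : 'I_r -> F, b ord_max = \sum_(l < r) c l *: e l)) => [[c Hc]|nc].
  exists r, e; split=> //.
  exists (fun i => if unlift ord_max i is Some i' then beta i' else c).
  move=> i; case: (unliftP ord_max i) => [j ->|->] //; exact: Hb.
exists r.+1, (ext e (b ord_max)); split.
  by apply: indep_ext => // c E; apply: nc; exists c.
exists (fun i l => if unlift ord_max i is Some i' then
          (if unlift ord_max l is Some l' then beta i' l' else 0)
        else (if unlift ord_max l is Some _ then 0 else 1)).
move=> i; rewrite sum_ord_max ext_max unlift_none.
under eq_bigr do rewrite ext_lift liftK.
case: (unliftP ord_max i) => [j ->|->]; rewrite ?liftK ?unlift_none.
  by rewrite scale0r addr0 -Hb.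
by rewrite big1 ?add0r ?scale1r // => l _; rewrite scale0r.
Qed.

End LinAlg.

Definition cnt (T : Type) (P : T -> Prop) :=
  exists e : nat -> T, forall t, P t -> exists n, e n = t.

Lemma fiber (T : Type) (t0 : T) (P : T -> Prop) (g : T -> nat) :
  ~ cnt P -> exists n, ~ cnt (fun t => P t /\ g t = n).
Proof.
move=> nP; apply: NNPP => H.
have H' : forall n, cnt (fun t => P t /\ g t = n).
  by move=> n; apply: NNPP => Hn; apply: H; exists n.
pose E n := proj1_sig (constructive_indefinite_description _ (H' n)).
have EP n : forall t, P t /\ g t = n -> exists b, E n b = t.
  exact: (proj2_sig (constructive_indefinite_description _ (H' n))).
apply: nP.
exists (fun m => if (unpickle m : option (nat * nat)) is Some (a, b) then E a b else t0).
move=> t Pt; have [b Eb] := EP (g t) t (conj Pt erefl).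
by exists (pickle (g t, b)); rewrite pickleK.
Qed.

Lemma many (T : eqType) (t0 : T) (P : T -> Prop) : ~ cnt P ->
  forall m, exists s : seq T, [/\ uniq s, size s = m & forall t, t \in s -> P t].
Proof.
move=> nP; elim=> [|m [s [us ss Ps]]]; first by exists [::].
have [t [Pt ts]] : exists t, P t /\ t \notin s.
  apply: NNPP => H; apply: nP.
  exists (fun n => nth t0 s n) => t Pt.
  case: (boolP (t \in s)) => ts.
    by exists (index t s); rewrite nth_index.
  by exfalso; apply: H; exists t.
exists (t :: s); split => /=; first by rewrite ts us.
  by rewrite ss.
by move=> u; rewrite inE => /orP [/eqP ->|]; [|apply: Ps].
Qed.

Lemma many_fun (T : eqType) (t0 : T) (P : T -> Prop) : ~ cnt P ->
  forall m, exists l : 'I_m -> T, injective l /\ forall i, P (l i).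
Proof.
move=> nP m; have [s [us ss Ps]] := many t0 nP m.
exists (fun i => nth t0 s i); split.
  move=> i j /eqP; rewrite nth_uniq ?ss // => /eqP; exact: val_inj.
by move=> i; apply: Ps; rewrite mem_nth ?ss.
Qed.

Section Std.
Variables (F : fieldType) (A : algType F).

Definition upd m (x : 'I_m -> A) (p : 'I_m) (y : A) : 'I_m -> A :=
  fun i => if i == p then y else x i.

Lemma prod_split m (G : 'I_m -> A) (i0 : 'I_m) :
  exists L R, forall y, \prod_(i < m) (if i == i0 then y else G i) = L * y * R.
Proof.
elim: m G i0 => [|m IH] G i0; first by case: i0.
case: (unliftP ord0 i0) => [j ->|->].
  have [L [R HLR]] := IH (fun i => G (lift ord0 i)) j.
  exists (G ord0 * L), R => y; rewrite big_ord_recl.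
  have -> : (ord0 == lift ord0 j) = false by apply/negbTE; rewrite neq_lift.
  rewrite -!mulrA; congr (_ * _); rewrite mulrA -HLR; apply: eq_bigr => i _.
  by rewrite (inj_eq (@lift_inj _ ord0)).
exists 1, (\prod_(i < m) G (lift ord0 i)) => y; rewrite big_ord_recl eqxx mul1r.
congr (_ * _); apply: eq_bigr => i _.
Qed.

Definition stdp m (x : 'I_m -> A) : A :=
  \sum_(s : 'S_m) ((-1 : F) ^+ odd_perm s) *: \prod_(i < m) x (s i).

Lemma stdp_term m (x : 'I_m -> A) p (s : 'S_m) :
  exists L R, forall y, \prod_(i < m) upd x p y (s i) = L * y * R.
Proof.
have [L [R HLR]] := prod_split (fun i => x (s i)) ((s^-1)%g p).
exists L, R => y; rewrite -HLR; apply: eq_bigr => i _.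
rewrite /upd; congr (if _ then _ else _).
by rewrite -{1}(permKV s p) (inj_eq perm_inj).
Qed.

Lemma stdp_lin m (x : 'I_m -> A) p a u v :
  stdp (upd x p (a *: u + v)) = a *: stdp (upd x p u) + stdp (upd x p v).
Proof.
rewrite /stdp scaler_sumr -big_split /=; apply: eq_bigr => s _.
have [L [R HLR]] := stdp_term x p s.
rewrite !HLR mulrDr mulrDl -scalerAr -scalerAl scalerDr !scalerA; congr (_ *: _ + _); exact: mulrC.
Qed.

Lemma stdp0 m (x : 'I_m -> A) p : stdp (upd x p 0) = 0.
Proof.
have := stdp_lin x p 1 0 0; rewrite !scale1r addr0 => H.
by apply: (@addrI _ (stdp (upd x p 0))); rewrite addr0 -H.
Qed.

Lemma stdp_sum m (x : 'I_m -> A) p n (c : 'I_n -> F) (y : 'I_n -> A) :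
  stdp (upd x p (\sum_(i < n) c i *: y i)) = \sum_(i < n) c i *: stdp (upd x p (y i)).
Proof.
have Hadd : {morph (fun y => stdp (upd x p y)) : u v / u + v >-> u + v}.
  by move=> u v /=; rewrite -{1}(scale1r u) stdp_lin scale1r.
rewrite (big_morph _ Hadd (stdp0 x p)); apply: eq_bigr => i _.
by rewrite -[c i *: y i]addr0 stdp_lin stdp0 addr0.
Qed.

Lemma ideal_scale (I : A -> Prop) : two_sided_ideal I -> forall c x, I x -> I (c *: x).
Proof. by case=> _ _ HM c x Ix; rewrite -[x]mul1r scalerAl; case: (HM (c *: 1) x Ix). Qed.

Lemma ideal_sum (I : A -> Prop) : two_sided_ideal I ->
  forall (T : Type) (r : seq T) (G : T -> A), (forall t, I (G t)) -> I (\sum_(t <- r) G t).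
Proof. by case=> I0 ID _ T r G HG; apply: big_ind. Qed.

Lemma stdp_ideal (I : A -> Prop) m (x : 'I_m -> A) p y :
  two_sided_ideal I -> I y -> I (stdp (upd x p y)).
Proof.
move=> HI Iy; apply: ideal_sum => // s; apply: ideal_scale => //.
have [L [R ->]] := stdp_term x p s.
by case: HI => _ _ HM; case: (HM L y Iy) => H1 _; case: (HM R _ H1).
Qed.

Lemma stdp_alt m (x : 'I_m -> A) i j : i != j -> x i = x j -> stdp x = 0.
Proof.
move=> neq eqx; pose t := tperm i j.
have oddMt (s : 'S_m) : odd_perm (s * t)%g = ~~ odd_perm s.
  by rewrite odd_permM odd_tperm neq addbT.
rewrite /stdp (bigID (fun s : 'S_m => odd_perm s)) /=.
rewrite (reindex_inj (@mulIg _ t)) /=.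
under eq_bigl do rewrite oddMt.
rewrite -[X in X + _]opprK -sumrN; apply/eqP; rewrite addrC subr_eq0; apply/eqP.
apply: eq_bigr => s _; rewrite oddMt signrN scaleNr opprK; congr (_ *: _).
apply: eq_bigr => l _; rewrite permM /t.
by case: tpermP => [->|->|] //; rewrite eqx.
Qed.

Lemma PI_of n (T : finType) (W : T -> seq 'I_n) (eps : T -> F) L :
  (forall t, size (W t) = L) -> injective W -> (exists t, eps t != 0) ->
  (forall x : 'I_n -> A, \sum_t eps t *: \prod_(i <- W t) x i = 0) -> satisfies_PI A.
Proof.
move=> sW iW [t0 nz0] HW.
exists n, L, (fun w => \sum_t (if W t == w then eps t else 0)); split.
- move=> w lt; apply: big1 => t _; case: eqP => // E.
  by move: lt; rewrite -E sW ltnn.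
- exists (W t0); rewrite (bigD1 t0) //= eqxx big1 ?addr0 // => t ne.
  by rewrite (inj_eq iW) (negbTE ne).
- move=> x; rewrite -[RHS](HW x).
  under eq_bigr do under eq_bigr do rewrite scaler_suml.
  under eq_bigr do rewrite exchange_big /=.
  rewrite exchange_big /=; apply: eq_bigr => t _.
  rewrite (bigD1 ord_max) //= [X in _ + X]big1 ?addr0; last first.
    move=> mm ne; apply: big1 => w _; case: eqP => [E|_]; last by rewrite scale0r.
    have H : size (W t) = mm by rewrite E size_tuple.
    exfalso; move/negP: ne; apply; apply/eqP/val_inj => /=; by rewrite -H sW.
  have sz : size (W t) == L by rewrite sW.
  pose w0 : (nat_of_ord (@ord_max L)).-tuple 'I_n := Tuple sz.
  rewrite (bigD1 w0) //= eqxx [X in _ + X]big1 ?addr0 // => w ne.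
  case: eqP => [E|_]; last by rewrite scale0r.
  move: ne; suff -> : w = w0 by rewrite eqxx.
  by apply: val_inj; rewrite /= E.
Qed.

Lemma size_ie M : size (index_enum 'I_M) = M.
Proof.
rewrite -[RHS](size_enum_ord M) -deprecated_filter_index_enum.
by rewrite (@eq_filter _ _ predT) ?filter_predT.
Qed.

Lemma PI_Q M :
  (forall x : 'I_(M + M) -> A,
      stdp (fun i => x (lshift M i)) * stdp (fun i => x (rshift M i)) = 0) ->
  satisfies_PI A.
Proof.
move=> HQ.
apply: (@PI_of (M + M) ('S_M * 'S_M)%type
  (fun p => [seq lshift M (p.1 i) | i <- index_enum 'I_M] ++
            [seq rshift M (p.2 i) | i <- index_enum 'I_M])
  (fun p => (-1 : F) ^+ odd_perm p.1 * (-1) ^+ odd_perm p.2) (M + M)).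
- by move=> p; rewrite size_cat !size_map size_ie.
- move=> [s1 s2] [t1 t2] /= /eqP; rewrite eqseq_cat ?size_map //.
  case/andP => /eqP E1 /eqP E2.
  have Ep (s t : 'S_M) (f : 'I_M -> 'I_(M + M)) : injective f ->
      [seq f (s i) | i <- index_enum 'I_M] = [seq f (t i) | i <- index_enum 'I_M] -> s = t.
    move=> fi E; apply/permP => i.
    have : [seq f (s i) | i <- index_enum 'I_M] =i [seq f (t i) | i <- index_enum 'I_M] by rewrite E.
    move: E => /eq_in_map => /(_ i (mem_index_enum i)) /fi; done.
  by rewrite (Ep _ _ _ (@lshift_inj M M) E1) (Ep _ _ _ (@rshift_inj M M) E2).
- by exists (1%g, 1%g); rewrite /= odd_perm1 mulr1 oner_eq0.
- move=> x; rewrite -[RHS](HQ x) /stdp mulr_suml.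
  under [RHS]eq_bigr do rewrite mulr_sumr.
  rewrite pair_big /=; apply: eq_bigr => -[s1 s2] _ /=.
  rewrite big_cat /= !big_map -scalerAl -scalerAr scalerA; done.
Qed.

End Std.

Section ASide.
Variables (k : fieldType) (A : algType k).

Definition codim_le (I : A -> Prop) N :=
  exists e : 'I_N -> A, forall v, exists c : 'I_N -> k, I (v - \sum_(i < N) c i *: e i).

Lemma stdp_ext m (x y : 'I_m -> A) : x =1 y -> stdp x = stdp y.
Proof. by move=> E; apply: eq_bigr => s _; congr (_ *: _); apply: eq_bigr => i _; rewrite E. Qed.

Lemma upd_id m (x : 'I_m -> A) p : upd x p (x p) =1 x.
Proof. by move=> i; rewrite /upd; case: eqP => // ->. Qed.

Lemma stdp_in (I : A -> Prop) N M : two_sided_ideal I -> codim_le I N -> (N < M)%N ->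
  forall x : 'I_M -> A, I (stdp x).
Proof.
move=> HI [e He] ltNM x.
have HIc := HI; case: HIc => I0 ID _.
pose c i := proj1_sig (constructive_indefinite_description _ (He (x i))).
have Hc i : I (x i - \sum_(l < N) c i l *: e l).
  exact: (proj2_sig (constructive_indefinite_description _ (He (x i)))).
have [g [[p nz] Iu]] := dep_mod I0 ID (ideal_scale HI) ltNM Hc.
set u := \sum_(i < M) g i *: x i in Iu.
pose g' i := if i == p then 0 else - g i.
have Ex : g p *: x p = u + \sum_(i < M) g' i *: x i.
  rewrite /u (bigD1 p) //= [X in _ = _ + X](bigD1 p) //= /g' eqxx scale0r add0r.
  rewrite -addrA -big_split /= big1 ?addr0 // => i ne.
  by rewrite (negbTE ne) scaleNr subrr.
clearbody u.
have : I (g p *: stdp x).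
  rewrite -(stdp_ext (upd_id x p)) -[g p *: _]addr0 -(stdp0 x p) -stdp_lin addr0 Ex.
  rewrite -[u]scale1r stdp_lin scale1r stdp_sum [X in _ + X]big1 ?addr0.
    exact: stdp_ideal.
  move=> i _; rewrite /g'; case: eqP => [_|/eqP ne]; first by rewrite scale0r.
  rewrite (@stdp_alt _ _ _ _ i p ne) ?scaler0 //.
  by rewrite /upd eqxx (negbTE ne).
move/(ideal_scale HI (g p)^-1); rewrite scalerA mulVf // scale1r; done.
Qed.

Definition gen (a : A) (y : A) := exists s : seq (A * A), y = \sum_(q <- s) q.1 * a * q.2.

Lemma gen_ideal a : two_sided_ideal (gen a).
Proof.
split.
- by exists [::]; rewrite big_nil.
- by move=> x y [s ->] [t ->]; exists (s ++ t); rewrite big_cat.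
- move=> b x [s ->]; split.
    exists [seq (b * q.1, q.2) | q <- s]; rewrite big_map mulr_sumr.
    by apply: eq_bigr => q _; rewrite !mulrA.
  exists [seq (q.1, q.2 * b) | q <- s]; rewrite big_map mulr_suml.
  by apply: eq_bigr => q _; rewrite !mulrA.
Qed.

Lemma gen_self a : gen a a.
Proof. by exists [:: (1, 1)]; rewrite big_seq1 mul1r mulr1. Qed.

Hypothesis JI : just_infinite A.
Hypothesis nPI : ~ satisfies_PI A.

Lemma primeA (a b : A) : (forall r, a * r * b = 0) -> a = 0 \/ b = 0.
Proof.
move=> H; apply: NNPP => nab.
have na : a <> 0 by move=> E; apply: nab; left.
have nb : b <> 0 by move=> E; apply: nab; right.
have [n1 [e1 H1]] := JI.2 _ (gen_ideal a) (ex_intro _ a (conj (gen_self a) na)).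
have [n2 [e2 H2]] := JI.2 _ (gen_ideal b) (ex_intro _ b (conj (gen_self b) nb)).
apply: nPI; apply: (@PI_Q _ _ (n1 + n2).+1) => x.
have l1 : (n1 < (n1 + n2).+1)%N by rewrite ltnS leq_addr.
have l2 : (n2 < (n1 + n2).+1)%N by rewrite ltnS leq_addl.
have [s Es] := stdp_in (gen_ideal a) (ex_intro _ e1 H1) l1 (fun i => x (lshift _ i)).
have [t Et] := stdp_in (gen_ideal b) (ex_intro _ e2 H2) l2 (fun i => x (rshift _ i)).
rewrite Es Et mulr_suml big1 // => q _; rewrite mulr_sumr big1 // => q' _.
have -> : q.1 * a * q.2 * (q'.1 * b * q'.2) = q.1 * (a * (q.2 * q'.1) * b) * q'.2 by rewrite !mulrA.
by rewrite H mulr0 mul0r.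
Qed.

Lemma heart N : exists z : A, z <> 0 /\
  forall I, two_sided_ideal I -> codim_le I N -> I z.
Proof.
apply: NNPP => H; apply: nPI; apply: (@PI_Q _ _ N.+1) => x.
suff -> : stdp (fun i => x (lshift N.+1 i)) = 0 by rewrite mul0r.
apply: NNPP => nz; apply: H; exists (stdp (fun i => x (lshift N.+1 i))); split => //.
by move=> I HI HN; apply: stdp_in HI HN _ _.
Qed.

End ASide.

Section CDim.
Variables (k : fieldType) (A : algType k) (g : nat -> A).

Definition mon (n : nat) : A :=
  if (unpickle n : option (seq nat)) is Some w then \prod_(i <- w) g i else 0.

Definition Vm M (a : A) := exists c : nat -> k, a = \sum_(l < M) c l *: mon l.
Definition Sp (a : A) := exists M, Vm M a.

Lemma Vm_widen M M' a : Vm M a -> (M <= M')%N -> Vm M' a.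
Proof.
move=> [c ->] le; exists (fun n => if (n < M)%N then c n else 0).
rewrite (big_ord_widen M' (fun l => c l *: mon l) le) big_mkcond /=.
by apply: eq_bigr => i _; case: ifP => //; rewrite scale0r.
Qed.

Lemma Sp0 : Sp 0.
Proof. by exists 0%N, (fun _ => 0); rewrite big_ord0. Qed.

Lemma SpD a b : Sp a -> Sp b -> Sp (a + b).
Proof.
move=> [M Ha] [M' Hb].
have [c Ec] := Vm_widen Ha (leq_maxl M M').
have [d Ed] := Vm_widen Hb (leq_maxr M M').
exists (maxn M M'), (fun n => c n + d n); rewrite Ec Ed -big_split /=.
by apply: eq_bigr => i _; rewrite scalerDl.
Qed.

Lemma SpZ x a : Sp a -> Sp (x *: a).
Proof.
move=> [M [c ->]]; exists M, (fun n => x * c n); rewrite scaler_sumr.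
by apply: eq_bigr => i _; rewrite scalerA.
Qed.

Lemma Sp_sum (T : Type) (r : seq T) (G : T -> A) : (forall t, Sp (G t)) -> Sp (\sum_(t <- r) G t).
Proof. by move=> H; apply: big_ind => //; [exact: Sp0 | exact: SpD]. Qed.

Lemma Sp_mon n : Sp (mon n).
Proof.
exists n.+1, (fun l => if l == n then 1 else 0).
rewrite big_ord_recr /= eqxx scale1r big1 ?add0r // => i _.
by rewrite (ltn_eqF (ltn_ord i)) scale0r.
Qed.

Lemma Sp_monM l r : Sp (mon l * mon r).
Proof.
rewrite /mon; case: (unpickle l) => [w1|]; last by rewrite mul0r; exact: Sp0.
case: (unpickle r) => [w2|]; last by rewrite mulr0; exact: Sp0.
have := Sp_mon (pickle (w1 ++ w2)); rewrite /mon pickleK big_cat; done.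
Qed.

Lemma SpM a b : Sp a -> Sp b -> Sp (a * b).
Proof.
move=> [M [c ->]] [M' [d ->]]; rewrite mulr_suml; apply: Sp_sum => l.
rewrite mulr_sumr; apply: Sp_sum => r.
rewrite -scalerAl -scalerAr; apply: SpZ; apply: SpZ; exact: Sp_monM.
Qed.

Lemma Sp1 : Sp 1.
Proof. by have := Sp_mon (pickle ([::] : seq nat)); rewrite /mon pickleK big_nil. Qed.

Lemma Sp_g n : Sp (g n).
Proof. by have := Sp_mon (pickle [:: n]); rewrite /mon pickleK big_seq1. Qed.

Lemma Sp_subalg : subalgebra Sp.
Proof. split; [exact: Sp1 | exact: SpD | exact: SpM | exact: SpZ]. Qed.

End CDim.

Lemma cdim (k : fieldType) (A : algType k) : countably_generated A ->
  exists b : nat -> A, forall a, exists M (c : nat -> k), a = \sum_(l < M) c l *: b l.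
Proof.
move=> [g Hg]; exists (mon g) => a.
exact: (Hg _ (Sp_subalg g) (Sp_g g) a).
Qed.

Lemma dep_V (k : fieldType) (A : lmodType k) (b : nat -> A) M m (w : 'I_m -> A) :
  (M < m)%N -> (forall i, exists c : nat -> k, w i = \sum_(l < M) c l *: b l) ->
  exists gam : 'I_m -> k, (exists i, gam i != 0) /\ \sum_(i < m) gam i *: w i = 0.
Proof.
move=> lt H.
pose c i := proj1_sig (constructive_indefinite_description _ (H i)).
have Hc i : w i = \sum_(l < M) c i l *: b l.
  exact: (proj2_sig (constructive_indefinite_description _ (H i))).
have P0 : (0 : A) = 0 by [].
have PD : forall x y : A, x = 0 -> y = 0 -> x + y = 0 by move=> x y -> ->; rewrite addr0.
have PZ : forall (c : k) (x : A), x = 0 -> c *: x = 0 by move=> ? x ->; rewrite scaler0.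
apply: (@dep_mod _ _ (fun x => x = 0) P0 PD PZ m M (fun l => b l) w (fun i l => c i l) lt).
by move=> i; rewrite [w i]Hc subrr.
Qed.

Lemma eig_exists (k : closedFieldType) n (Fm : 'M[k]_n.+1) :
  exists mu (v : 'rV_n.+1), v *m Fm = mu *: v /\ v != 0.
Proof.
have : size (char_poly Fm) != 1 by rewrite size_char_poly.
case/closed_rootP => mu; rewrite -eigenvalue_root_char => /eigenvalueP [v Hv nz].
by exists mu, v.
Qed.

Section Key.
Variables (k : closedFieldType) (A : algType k).
Hypothesis unc : uncountable k.
Hypothesis primeH : forall a b : A, (forall r, a * r * b = 0) -> a = 0 \/ b = 0.
Hypothesis heartH : forall N, exists z : A, z <> 0 /\
  forall I, two_sided_ideal I -> codim_le I N -> I z.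
Hypothesis cdH : exists b : nat -> A, forall a, exists M (c : nat -> k), a = \sum_(l < M) c l *: b l.
Hypothesis JIfin : forall I : A -> Prop, two_sided_ideal I -> (exists x, I x /\ x <> 0) -> fin_codim I.

Variables (J : A -> Prop) (f : A -> A).
Hypothesis HJ : two_sided_ideal J.
Hypothesis Jnz : exists u, J u /\ u <> 0.
Hypothesis fD : forall u v, J u -> J v -> f (u + v) = f u + f v.
Hypothesis fZ : forall (c : k) u, J u -> f (c *: u) = c *: f u.
Hypothesis fM : forall a u b, J u -> f (a * u * b) = a * f u * b.

Lemma J0 : J 0. Proof. by case: HJ. Qed.
Lemma JL a u : J u -> J (a * u). Proof. by case: HJ => _ _ H /(H a) []. Qed.
Lemma JR a u : J u -> J (u * a). Proof. by case: HJ => _ _ H /(H a) []. Qed.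

Lemma f0 : f 0 = 0.
Proof. by rewrite -(scale0r (0 : A)) fZ ?scale0r //; exact: J0. Qed.

Lemma fL a u : J u -> f (a * u) = a * f u.
Proof. by move=> Ju; rewrite -[a * u]mulr1 fM // mulr1. Qed.

Lemma fR u b : J u -> f (u * b) = f u * b.
Proof. by move=> Ju; rewrite -[u * b]mul1r mulrA fM // mul1r. Qed.

Lemma f_sum n (c : 'I_n -> k) (w : 'I_n -> A) : (forall i, J (w i)) ->
  f (\sum_(i < n) c i *: w i) = \sum_(i < n) c i *: f (w i).
Proof.
move=> Jw; elim: (index_enum _) => [|i r IH]; first by rewrite !big_nil f0.
rewrite !big_cons fD ?fZ ?IH //; first exact: ideal_scale.
by apply: ideal_sum => // j; apply: ideal_scale.
Qed.

Lemma case1 lam u : J u -> u <> 0 -> f u = lam *: u -> forall v, J v -> f v = lam *: v.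
Proof.
move=> Ju nu Hu v Jv; apply/eqP; rewrite -subr_eq0; apply/eqP.
suff HP : forall r, (f v - lam *: v) * r * u = 0.
  by case: (primeH HP) => // /nu.
move=> r; rewrite mulrBl mulrBl.
have -> : f v * r * u = f (v * (r * u)) by rewrite fR ?mulrA //.
have -> : v * (r * u) = v * r * u * 1 by rewrite mulr1 mulrA.
by rewrite fM // Hu mulr1 -scalerAr -!scalerAl subrr.
Qed.

Section NI.
Hypothesis NI : forall lam u, J u -> f u = lam *: u -> u = 0.

Lemma indep_w (z : A) : z <> 0 -> forall m (lam : 'I_m -> k) (w : 'I_m -> A),
  injective lam -> (forall i, J (w i)) -> (forall i, f (w i) = z + lam i *: w i) ->
  forall gam : 'I_m -> k, \sum_(i < m) gam i *: w i = 0 -> forall i, gam i = 0.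
Proof.
move=> nz; elim=> [|m IH] lam w ilam Jw Hf gam H; first by case.
pose lm := lam ord_max.
pose s := \sum_(i < m.+1) gam i.
have E : s *: z + \sum_(i < m) (gam (lift ord_max i) * (lam (lift ord_max i) - lm)) *:
    w (lift ord_max i) = 0.
  have H1 : f (\sum_(i < m.+1) gam i *: w i) - lm *: (\sum_(i < m.+1) gam i *: w i) = 0.
    by rewrite H f0 scaler0 subrr.
  rewrite f_sum // scaler_sumr -sumrB in H1.
  rewrite -{}[RHS]H1 /s scaler_suml.
  rewrite [in RHS](eq_bigr (fun i => gam i *: z + (gam i * (lam i - lm)) *: w i)); last first.
    move=> i _; rewrite Hf scalerDr !scalerA mulrBr scalerBl [lm * _]mulrC addrA //.
  rewrite big_split /=; congr (_ + _).
  by rewrite [RHS]sum_ord_max /lm subrr mulr0 scale0r addr0.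
have ilam' : injective (fun i => lam (lift ord_max i)).
  by move=> i j /ilam /lift_inj.
have neq i : lam (lift ord_max i) - lm != 0.
  rewrite subr_eq0; apply/negP => /eqP /ilam /eqP; by rewrite eq_sym (negbTE (neq_lift _ _)).
have IHw := IH _ (fun i => w (lift ord_max i)) ilam' (fun i => Jw _) (fun i => Hf _).
case: (eqVneq s 0) => [s0|snz].
  rewrite s0 scale0r add0r in E.
  have Hg i : gam (lift ord_max i) = 0.
    by have /eqP := IHw _ E i; rewrite mulf_eq0 (negbTE (neq i)) orbF => /eqP.
  move=> i; case: (unliftP ord_max i) => [j ->|->]; first exact: Hg.
  move: s0; rewrite /s sum_ord_max big1 ?add0r //.
exfalso.
pose al i := - (s^-1 * (gam (lift ord_max i) * (lam (lift ord_max i) - lm))).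
have Ez : z = \sum_(i < m) al i *: w (lift ord_max i).
  apply: (scalerI snz); rewrite scaler_sumr.
  have -> : s *: z = - \sum_(i < m) (gam (lift ord_max i) * (lam (lift ord_max i) - lm)) *:
      w (lift ord_max i) by apply/eqP; rewrite -addr_eq0 E.
  rewrite -sumrN; apply: eq_bigr => i _; rewrite scalerA /al mulrN mulrA mulfV // mul1r.
  by rewrite scaleNr.
case: m IH lam w ilam Jw Hf gam H lm s E ilam' neq IHw snz al Ez => [|m] _ lam w ilam Jw Hf gam H lm s E ilam' neq IHw snz al Ez.
  by apply: nz; rewrite Ez big_ord0.
pose w' i := w (lift ord_max i).
pose lam' i := lam (lift ord_max i).
pose Fm : 'M[k]_m.+1 := \matrix_(i, j) (al j + (i == j)%:R * lam' i).
have [mu [v [Hv vnz]]] := eig_exists Fm.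
pose x := \sum_(j < m.+1) v 0 j *: w' j.
have Jx : J x by apply: ideal_sum => // j; apply: ideal_scale => //; exact: Jw.
have fw i : f (w' i) = \sum_(j < m.+1) Fm i j *: w' j.
  under eq_bigr do rewrite mxE scalerDl.
  rewrite big_split /= -Ez /w' Hf; congr (_ + _).
  rewrite (bigD1 i) //= eqxx mul1r big1 ?addr0 // => j ne.
  by rewrite eq_sym (negbTE ne) mul0r scale0r.
have fx : f x = mu *: x.
  rewrite /x f_sum; last by move=> j; exact: Jw.
  under eq_bigr do rewrite fw scaler_sumr.
  rewrite exchange_big /= scaler_sumr; apply: eq_bigr => j _.
  have := Hv; move/matrixP/(_ 0 j); rewrite !mxE => Hj.
  rewrite scalerA -Hj scaler_suml; apply: eq_bigr => i _; by rewrite scalerA.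
have x0 := NI Jx fx.
move: vnz; case/matrix0Pn => i0 [j0]; rewrite (ord1 i0).
by rewrite (IHw _ x0 j0) eqxx.
Qed.

End NI.

Lemma key : exists lam, forall u, J u -> f u = lam *: u.
Proof.
case: (classic (exists lam u, J u /\ u <> 0 /\ f u = lam *: u)) => [[lam [u [Ju [nu Hu]]]]|NE].
  by exists lam; apply: case1 Ju nu Hu.
exfalso.
have NI : forall lam u, J u -> f u = lam *: u -> u = 0.
  by move=> lam u Ju Hu; apply: NNPP => nu; apply: NE; exists lam, u.
pose Il lam (y : A) := exists u, J u /\ y = f u - lam *: u.
have Il_ideal lam : two_sided_ideal (Il lam).
  split.
  - by exists 0; rewrite f0 scaler0 subrr; split => //; exact: J0.
  - move=> x y [u [Ju ->]] [v [Jv ->]]; exists (u + v); split.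
      by case: HJ => _ HD _; apply: HD.
    by rewrite fD // scalerDr opprD addrACA.
  - move=> a x [u [Ju ->]]; split.
      exists (a * u); split; first exact: JL.
      by rewrite fL // mulrBr scalerAr.
    exists (u * a); split; first exact: JR.
    by rewrite fR // mulrBl scalerAl.
have Il_nz lam : exists x, Il lam x /\ x <> 0.
  have [u [Ju nu]] := Jnz; exists (f u - lam *: u); split; first by exists u.
  move/eqP; rewrite subr_eq0 => /eqP /(NI _ _ Ju); done.
pose Np lam := proj1_sig (constructive_indefinite_description _
                  (JIfin (Il_ideal lam) (Il_nz lam))).
have Np_spec lam : codim_le (Il lam) (Np lam).
  exact: (proj2_sig (constructive_indefinite_description _ (JIfin (Il_ideal lam) (Il_nz lam)))).
have nc : ~ cnt (fun _ : k => True).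
  by move=> [e He]; exact: (unc (fun t => He t I)).
have [N HN] := fiber 0 Np nc.
have [z [nz Hz]] := heartH N.
have Hw lam : Np lam = N -> exists w, J w /\ f w = z + lam *: w.
  move=> E; have := Np_spec lam; rewrite E => /(Hz _ (Il_ideal lam)) [w [Jw Ew]].
  by exists w; split => //; rewrite Ew subrK.
pose W lam := epsilon (inhabits (0 : A)) (fun w => J w /\ f w = z + lam *: w).
have W_spec lam : Np lam = N -> J (W lam) /\ f (W lam) = z + lam *: W lam.
  by move=> E; exact: (epsilon_spec (inhabits 0) _ (Hw lam E)).
have [b Hb] := cdH.
pose Mp lam := proj1_sig (constructive_indefinite_description _ (Hb (W lam))).
have Mp_spec lam : exists c : nat -> k, W lam = \sum_(l < Mp lam) c l *: b l.
  exact: (proj2_sig (constructive_indefinite_description _ (Hb (W lam)))).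
have [M HM] := fiber 0 Mp HN.
have [ls [ils Hls]] := many_fun 0 HM M.+1.
have HV i : exists c : nat -> k, W (ls i) = \sum_(l < M) c l *: b l.
  by case: (Hls i) => _ E2; rewrite -E2; exact: Mp_spec.
have [gam [[i0 gnz] Hg]] := @dep_V _ _ b M M.+1 (fun i => W (ls i)) (ltnSn M) HV.
have := indep_w NI nz ils (fun i => (W_spec (ls i) (Hls i).1.2).1)
   (fun i => (W_spec _ (Hls i).1.2).2) Hg i0.
by move/eqP: gnz.
Qed.

End Key.

Lemma ex_min (P : nat -> Prop) : (exists n, P n) ->
  exists n, P n /\ forall m, (m < n)%N -> ~ P m.
Proof.
move=> [n Pn]; elim/ltn_ind: n Pn => n IH Pn.
case: (classic (exists m, (m < n)%N /\ P m)) => [[m [lt Pm]]|H].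
  exact: IH lt Pm.
by exists n; split => // m lt Pm; apply: H; exists m.
Qed.

Section BSide.
Variables (k K : fieldType) (iota : {rmorphism k -> K}) (A : algType k) (B : algType K)
  (j : A -> B).
Hypothesis jD : forall x y, j (x + y) = j x + j y.
Hypothesis jM : forall x y, j (x * y) = j x * j y.
Hypothesis jZ : forall (c : k) x, j (c *: x) = iota c *: j x.
Hypothesis jspan : forall b : B, exists n (d : 'I_n -> K) (a : 'I_n -> A),
  b = \sum_(i < n) d i *: j (a i).
Hypothesis jind : forall n (a : 'I_n -> A),
  (forall c : 'I_n -> k, \sum_(i < n) c i *: a i = 0 -> forall i, c i = 0) ->
  forall d : 'I_n -> K, \sum_(i < n) d i *: j (a i) = 0 -> forall i, d i = 0.

Lemma j0 : j 0 = 0.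
Proof. by apply: (@addrI _ (j 0)); rewrite -jD !addr0. Qed.

Lemma j_sum (T : Type) (r : seq T) (G : T -> A) : j (\sum_(t <- r) G t) = \sum_(t <- r) j (G t).
Proof. exact: (big_morph j jD j0). Qed.

Lemma jN x : j (- x) = - j x.
Proof. by apply/eqP; rewrite -addr_eq0 -jD addNr j0. Qed.

Lemma jB x y : j (x - y) = j x - j y.
Proof. by rewrite jD jN. Qed.

Lemma B_infdim : infinite_dim A -> infinite_dim B.
Proof.
move=> infA [N [e He]].
have [a ia] := exists_indep infA N.+1.
pose c i := proj1_sig (constructive_indefinite_description _ (He (j (a i)))).
have Hc i : j (a i) - \sum_(l < N) c i l *: e l = 0.
  exact: (proj2_sig (constructive_indefinite_description _ (He (j (a i))))).
have P0 : (0 : B) = 0 by [].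
have PD : forall x y : B, x = 0 -> y = 0 -> x + y = 0 by move=> x y -> ->; rewrite addr0.
have PZ : forall (c : K) (x : B), x = 0 -> c *: x = 0 by move=> ? x ->; rewrite scaler0.
have [g [[i gnz] Hg]] := @dep_mod _ _ (fun x => x = 0) P0 PD PZ N.+1 N e
   (fun i => j (a i)) c (ltnSn N) Hc.
by move/eqP: gnz; apply; apply: jind ia g Hg i.
Qed.

Lemma DI n (d : 'I_n -> K) :
  (forall c : 'I_n -> k, \sum_(i < n) iota (c i) * d i = 0 -> forall i, c i = 0) ->
  forall b : 'I_n -> A, \sum_(i < n) d i *: j (b i) = 0 -> forall i, b i = 0.
Proof.
move=> kind b H.
have [r [e [ie [beta Hb]]]] := basis_ext b.
have H2 : \sum_(l < r) (\sum_(i < n) d i * iota (beta i l)) *: j (e l) = 0.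
  rewrite -{}[RHS]H; under eq_bigr do rewrite scaler_suml.
  rewrite exchange_big /=; apply: eq_bigr => i _.
  rewrite Hb j_sum scaler_sumr; apply: eq_bigr => l _.
  by rewrite jZ scalerA.
have H3 := jind ie H2.
have H4 l := kind (fun i => beta i l) (etrans (eq_bigr _ (fun i _ => mulrC _ _)) (H3 l)).
by move=> i; rewrite Hb big1 // => l _; rewrite H4 scale0r.
Qed.

Hypothesis KEY : forall (J : A -> Prop) (f : A -> A), two_sided_ideal J ->
  (exists u, J u /\ u <> 0) ->
  (forall u v, J u -> J v -> f (u + v) = f u + f v) ->
  (forall (c : k) u, J u -> f (c *: u) = c *: f u) ->
  (forall a u b, J u -> f (a * u * b) = a * f u * b) ->
  exists lam, forall u, J u -> f u = lam *: u.
Hypothesis JIA : just_infinite A.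

Definition ev (t : A) (s : seq (A * A)) := \sum_(q <- s) q.1 * t * q.2.

Lemma ev_cat t s s' : ev t (s ++ s') = ev t s + ev t s'.
Proof. by rewrite /ev big_cat. Qed.

Lemma ev_neg t s : ev t [seq (- q.1, q.2) | q <- s] = - ev t s.
Proof. by rewrite /ev big_map -sumrN; apply: eq_bigr => q _; rewrite !mulNr. Qed.

Lemma ev_scale (c : k) t s : ev t [seq (c *: q.1, q.2) | q <- s] = c *: ev t s.
Proof. by rewrite /ev big_map scaler_sumr; apply: eq_bigr => q _; rewrite !scalerAl. Qed.

Lemma ev_LR b1 b2 t s : ev t [seq (b1 * q.1, q.2 * b2) | q <- s] = b1 * ev t s * b2.
Proof.
rewrite /ev big_map mulr_sumr mulr_suml; apply: eq_bigr => q _.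
by rewrite !mulrA.
Qed.

Lemma B_just (I : B -> Prop) : two_sided_ideal I -> (exists x, I x /\ x <> 0) -> fin_codim I.
Proof.
move=> HI [x0 [Ix0 nx0]].
have HIc := HI; case: HIc => I0 ID IM.
pose rep n (x : B) := exists (d : 'I_n -> K) (a : 'I_n -> A), x = \sum_(i < n) d i *: j (a i).
have [n [[x [Ix [nx [d [a Ex]]]]] nmin]] :
    exists n, (exists x, I x /\ x <> 0 /\ rep n x) /\
      forall m, (m < n)%N -> ~ (exists x, I x /\ x <> 0 /\ rep m x).
  apply: ex_min; have [n Hn] := jspan x0; by exists n, x0.
have short m y : (m < n)%N -> I y -> rep m y -> y = 0.
  by move=> lt Iy Ry; apply: NNPP => ny; apply: (nmin m lt); exists y.
case: n d a Ex nmin short => [|n] d a Ex nmin short.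
  by exfalso; apply: nx; rewrite Ex big_ord0.
have kind : forall c : 'I_n.+1 -> k, \sum_(i < n.+1) iota (c i) * d i = 0 -> forall i, c i = 0.
  move=> c Hc p; apply/eqP; apply: contraT => cp; exfalso; apply: nx.
  apply: (short n) => //; exists (fun i => d (lift p i)),
    (fun i => a (lift p i) - (c (lift p i) / c p) *: a p).
  have Hs : \sum_(i < n) iota (c (lift p i)) * d (lift p i) = - (iota (c p) * d p).
    by apply/eqP; rewrite -addr_eq0 addrC; move: Hc; rewrite (bigD1_ord p) //= => ->.
  under eq_bigr do rewrite jB jZ scalerBr scalerA.
  rewrite sumrB -scaler_suml.
  have -> : \sum_(i < n) d (lift p i) * iota (c (lift p i) / c p) = - d p.
    under eq_bigr do rewrite fmorph_div mulrA [d _ * _]mulrC.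
    by rewrite -mulr_suml Hs mulNr [iota (c p) * _]mulrC mulfK // fmorph_eq0.
  by rewrite scaleNr opprK Ex (bigD1_ord p) //= addrC.
have a0nz : a ord0 <> 0.
  move=> a0; apply: nx; apply: (short n) => //.
  exists (fun i => d (lift ord0 i)), (fun i => a (lift ord0 i)).
  by rewrite Ex (bigD1_ord ord0) //= a0 j0 scaler0 add0r.
pose a0 := a ord0.
pose yB s := \sum_(q <- s) j q.1 * x * j q.2.
have IyB s : I (yB s).
  apply: ideal_sum => // q.
  by case: (IM (j q.2) _ (IM (j q.1) x Ix).1).
have EyB s : yB s = \sum_(i < n.+1) d i *: j (ev (a i) s).
  rewrite /yB Ex.
  under eq_bigr do rewrite mulr_sumr mulr_suml.
  rewrite exchange_big /=; apply: eq_bigr => i _.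
  rewrite /ev j_sum scaler_sumr; apply: eq_bigr => q _.
  by rewrite !jM -scalerAr -scalerAl.
have WD s : ev a0 s = 0 -> forall i, ev (a i) s = 0.
  move=> H0; apply: (DI kind).
  have : yB s = 0.
    apply: (short n) => //.
    exists (fun i => d (lift ord0 i)), (fun i => ev (a (lift ord0 i)) s).
    by rewrite EyB (bigD1_ord ord0) //= H0 j0 scaler0 add0r.
  by rewrite EyB.
pose fi (i : 'I_n.+1) (y : A) := ev (a i) (epsilon (inhabits [::]) (fun s => y = ev a0 s)).
have fi_spec i s : fi i (ev a0 s) = ev (a i) s.
  rewrite /fi; set s' := epsilon _ _.
  have Es' : ev a0 s = ev a0 s' :=
    epsilon_spec (inhabits [::]) (fun s0 => ev a0 s = ev a0 s0) (ex_intro _ s erefl).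
  have := WD (s ++ [seq (- q.1, q.2) | q <- s']).
  rewrite !ev_cat !ev_neg -Es' subrr => /(_ erefl i).
  by rewrite ev_cat ev_neg => /eqP; rewrite subr_eq0 => /eqP ->.
have JA := gen_ideal a0.
have gen_ev u : gen a0 u -> exists s, u = ev a0 s by [].
have fiKEY i : exists lam, forall u, gen a0 u -> fi i u = lam *: u.
  apply: KEY => //.
  - by exists a0; split => //; exact: gen_self.
  - by move=> u v /gen_ev [s ->] /gen_ev [t ->]; rewrite -ev_cat !fi_spec ev_cat.
  - by move=> c u /gen_ev [s ->]; rewrite -ev_scale !fi_spec ev_scale.
  - by move=> b1 u b2 /gen_ev [s ->]; rewrite -ev_LR !fi_spec ev_LR.
pose lam i := proj1_sig (constructive_indefinite_description _ (fiKEY i)).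
have Hlam i u : gen a0 u -> fi i u = lam i *: u :=
  proj2_sig (constructive_indefinite_description _ (fiKEY i)) u.
pose tau := \sum_(i < n.+1) iota (lam i) * d i.
have E1 : ev a0 [:: (1, 1)] = a0 by rewrite /ev big_seq1 mul1r mulr1.
have tnz : tau != 0.
  apply/negP => /eqP t0; have l0 := kind lam t0 ord0.
  apply: a0nz; have H1 := fi_spec ord0 [:: (1, 1)].
  rewrite /ev !big_seq1 /= !mul1r !mulr1 in H1.
  by change (a0 = 0); rewrite -H1 (Hlam ord0 a0 (gen_self a0)) l0 scale0r.
have HJI u : gen a0 u -> I (j u).
  move=> /gen_ev [s ->].
  have : I (tau *: j (ev a0 s)).
    suff <- : yB s = tau *: j (ev a0 s) by [].
    rewrite EyB /tau scaler_suml; apply: eq_bigr => i _.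
    rewrite -(fi_spec i s) Hlam; last by exists s.
    by rewrite jZ scalerA mulrC.
  by move/(ideal_scale HI tau^-1); rewrite scalerA mulVf // scale1r.
have [p [e He]] := JIA.2 _ JA (ex_intro _ a0 (conj (gen_self a0) a0nz)).
exists p, (fun l => j (e l)) => b.
have [m [d' [a' ->]]] := jspan b.
pose c i := proj1_sig (constructive_indefinite_description _ (He (a' i))).
have Hc i : gen a0 (a' i - \sum_(l < p) c i l *: e l) :=
  proj2_sig (constructive_indefinite_description _ (He (a' i))).
exists (fun l => \sum_(i < m) d' i * iota (c i l)).
have -> : \sum_(i < m) d' i *: j (a' i)
    - \sum_(l < p) (\sum_(i < m) d' i * iota (c i l)) *: j (e l)
   = \sum_(i < m) d' i *: j (a' i - \sum_(l < p) c i l *: e l).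
  under [X in _ - X]eq_bigr do rewrite scaler_suml.
  rewrite exchange_big /= -sumrB; apply: eq_bigr => i _.
  rewrite jB j_sum scalerBr scaler_sumr; congr (_ - _); apply: eq_bigr => l _.
  by rewrite jZ scalerA.
apply: ideal_sum => // i; apply: ideal_scale => //; exact: HJI.
Qed.

End BSide.

Theorem corollary6p4 (k : closedFieldType) (A : algType k) :
  uncountable k -> just_infinite A -> countably_generated A ->
  ~ satisfies_PI A -> stably_just_infinite A.
Proof.
move=> unc JI cg nPI; split => // K iota B j [[jD jM j1 jZ] [jspan jind]].
split; first exact: (B_infdim jind JI.1).
move=> I HI Inz.
apply: (@B_just k K iota A B j jD jM jZ jspan jind _ JI I HI Inz).
move=> J f HJ Jnz fD fZ fM.
exact: (key unc (primeA JI nPI) (heart nPI) (cdim cg) JI.2 HJ Jnz fD fZ fM).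
Qed.
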